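(* Let $F$ be a field of characteristic zero. The Lie algebra $W^+(1,0)$ is not simple.
   Context: $W^+(1,0)$ is the subalgebra of $W(1,0)$ spanned by $\{e^{ax}x^i\partial: a,i\in\mathbb N\}$ ($\mathbb N$ the nonnegative integers), where elements are vector fields $f\partial$ with $f$ in the algebra with basis $e^{ax}x^i$ (multiplication adding exponents), $\partial(e^{ax}x^i)=ae^{ax}x^i+ie^{ax}x^{i-1}$, and $[f\partial,g\partial]=(f\partial(g)-g\partial(f))\partial$. *)

(* Defs.v *)
From HB Require Import structures.
From mathcomp Require Import all_boot all_algebra.
From mathcomp Require Import mpoly.
Set Implicit Arguments. Unset Strict Implicit. Unset Printing Implicit Defensive.
Import GRing.Theory.
Local Open Scope ring_scope.

(* The commutative algebra A with basis e^{ax} x^i (a, i in N), multiplication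
   adding exponents, is modelled as the polynomial ring F[y, x] in two
   variables: variable 0 is y = e^x, variable 1 is x, and the basis element
   e^{ax} x^i is the monomial 'X_0^a * 'X_1^i. *)
Definition Aalg (F : fieldType) := {mpoly F[2]}.

Definition var_e : 'I_2 := ord0.
Definition var_x : 'I_2 := ord_max.

(* The derivation  d(e^{ax} x^i) = a e^{ax} x^i + i e^{ax} x^{i-1},
   i.e. d = y d/dy + d/dx. *)
Definition dW (F : fieldType) (f : Aalg F) : Aalg F :=
  'X_var_e * mderiv var_e f + mderiv var_x f.

(* Elements of W^+(1,0) are vector fields f d with f in A; we identify f d
   with f.  Bracket: [f d, g d] = (f d(g) - g d(f)) d. *)
Definition Wbr (F : fieldType) (f g : Aalg F) : Aalg F :=
  f * dW g - g * dW f.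

Definition W_ideal (F : fieldType) (I : Aalg F -> Prop) : Prop :=
  [/\ I 0,
      (forall u v, I u -> I v -> I (u + v)),
      (forall (c : F) u, I u -> I (c *: u)) &
      (forall u v, I v -> I (Wbr u v))].

Definition W_simple (F : fieldType) : Prop :=
  (exists u v : Aalg F, Wbr u v != 0) /\
  (forall I : Aalg F -> Prop, W_ideal I ->
     (forall u, I u -> u = 0) \/ (forall u, I u)).

(* Main.v *)
Require Import Defs.
From HB Require Import structures.
From mathcomp Require Import all_boot all_algebra.
From mathcomp Require Import mpoly.
From mathcomp Require Import ring.
Local Open Scope ring_scope.
Import GRing.Theory.

Lemma dW_X0 (F : fieldType) (h : Aalg F) :
  dW ('X_var_e * h) = 'X_var_e * (h + dW h).
Proof.
rewrite /dW !mderivM.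
have -> : mderiv var_e ('X_var_e : Aalg F) = 1.
  rewrite mderivX mnm1E eqxx scale1r.
  have -> : (U_(var_e) - U_(var_e) = 0 :> 'X_{1.. 2})%MM by apply/mnmP => j; rewrite !mnmE subnn.
  by rewrite mpolyX0.
have -> : mderiv var_x ('X_var_e : Aalg F) = 0.
  by rewrite mderivX mnm1E /= scale0r.
by rewrite mul1r mul0r add0r; ring.
Qed.

Theorem proposition2 (F : fieldType) (hF : [pchar F] =i pred0) :
  ~ W_simple F.
Proof.
move=> [_ Hs].
pose I := fun u : Aalg F => exists h, u = 'X_var_e * h.
have HI : W_ideal I.
  split.
  - by exists 0; rewrite mulr0.
  - by move=> u v [a ->] [b ->]; exists (a + b); rewrite mulrDr.
  - by move=> c u [a ->]; exists (c *: a); rewrite scalerAr.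
  - move=> u v [h ->]; exists (u * (h + dW h) - h * dW u).
    by rewrite /Wbr dW_X0; ring.
case: (Hs I HI) => [H|H].
- have := H 'X_var_e; rewrite /I => /(_ (ex_intro _ 1 (esym (mulr1 _)))).
  move/(congr1 (meval (fun _ => (1 : F)))) => /eqP.
  by rewrite mevalXU rmorph0 oner_eq0.
- case: (H 1) => h /(congr1 (meval (fun _ => (0 : F)))).
  by rewrite mevalM mevalXU mul0r rmorph1 => /eqP; rewrite oner_eq0.
Qed.
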